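(* Let $f:\mathbb{R}^n\to\mathbb{R}$ be $r+1$ times continuously differentiable for some integer $r\ge1$, with $\nabla f$ Lipschitz continuous with constant $L$. Let $x^*$ satisfy $\nabla f(x^* )=0$, and write $\nabla^2 f(x^* )=\sum_{i=1}^n\lambda_i v_iv_i^T$ with $\{v_1,\dots,v_n\}$ orthonormal and \[ \lambda_1\ge\dots\ge\lambda_{n-p}\ge 0>\lambda_{n-p+1}\ge\dots\ge\lambda_n \] for some $1\le p<n$; suppose $\lambda_1>0$. Let $0<\alpha<4/\lambda_1$ and $\beta\in(\max(-1+\alpha\lambda_1/2,0),1)$, let \[ DG(x^*,x^* )=\begin{bmatrix}(1+\beta)I-\alpha\nabla^2 f(x^* ) & -\beta I\\ I & 0\end{bmatrix}\in\mathbb{R}^{2n\times 2n}, \] and let $E_{cs}\subseteq\mathbb{R}^{2n}$ be the invariant subspace of $DG(x^*,x^* )$ corresponding to its eigenvalues of magnitude less than or equal to $1$. Then for $w\in\mathbb{R}^n$, the vector $(w,w)\in\mathbb{R}^{2n}$ lies in $E_{cs}$ only if $w\in\operatorname{span}\{v_1,\dots,v_{n-p}\}$, i.e. the span of the eigenvectors of $\nabla^2 f(x^* )$ corresponding to its nonnegative eigenvalues.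
   Context: $DG(x^*,x^* )$ is the Jacobian at $(x^*,x^* )$ of the heavy-ball map $G(z_1,z_2)=(z_1-\alpha\nabla f(z_1)+\beta(z_1-z_2),\,z_1)$. $E_{cs}$ is the sum of the (generalized, real) eigenspaces of $DG(x^*,x^* )$ for eigenvalues of complex modulus at most $1$. *)

(* Defs.v *)
From HB Require Import structures.
From mathcomp Require Import all_boot all_order all_algebra.
From mathcomp Require Import all_classical all_reals all_analysis.
From mathcomp Require Import complex.
Set Implicit Arguments. Unset Strict Implicit. Unset Printing Implicit Defensive.
Import Order.TTheory GRing.Theory Num.Theory.
Import numFieldNormedType.Exports.
Local Open Scope ring_scope.

Definition basis_vec (R : realType) (n : nat) (i : 'I_n) : 'cV[R]_n := delta_mx i 0.
Arguments basis_vec R {n} i.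

Definition partial (R : realType) (n : nat) (i : 'I_n) (f : 'cV[R]_n -> R)
  : 'cV[R]_n -> R := fun x => derive f x (basis_vec R i).

Fixpoint Ck (R : realType) (n : nat) (k : nat) (f : 'cV[R]_n -> R) : Prop :=
  continuous f /\
  match k with
  | 0 => True
  | k'.+1 => forall i : 'I_n,
      (forall x, derivable f x (basis_vec R i)) /\ Ck k' (partial i f)
  end.

Definition gradient (R : realType) (n : nat) (f : 'cV[R]_n -> R) (x : 'cV[R]_n)
  : 'cV[R]_n := \col_i partial i f x.

Definition hessian (R : realType) (n : nat) (f : 'cV[R]_n -> R) (x : 'cV[R]_n)
  : 'M[R]_n := \matrix_(i, j) partial j (partial i f) x.

Definition enorm (R : realType) (n : nat) (x : 'cV[R]_n) : R :=
  Num.sqrt (\sum_i x i 0 ^+ 2).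

Definition lipschitz_with (R : realType) (n : nat) (g : 'cV[R]_n -> 'cV[R]_n) (L : R) :=
  forall x y, enorm (g x - g y) <= L * enorm (x - y).

Definition heavy_ball_jacobian (R : realType) (n : nat) (H : 'M[R]_n) (alpha beta : R)
  : 'M[R]_(n + n) :=
  block_mx ((1 + beta)%:M - alpha *: H) (- beta%:M) 1%:M 0.

(* E_cs: the real invariant subspace of A equal to the sum of the (real) generalized
   eigenspaces for eigenvalues of complex modulus <= 1.  Concretely: the real vectors
   that are sums of complex generalized eigenvectors of A for eigenvalues mu with |mu| <= 1. *)
Definition E_cs (R : realType) (m : nat) (A : 'M[R]_m) : set 'cV[R]_m :=
  [set z | exists (k : nat) (mu : 'I_k -> R[i]) (w : 'I_k -> 'cV[R[i]]_m),
     (forall j, Normc.normc (mu j) <= 1) /\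
     (forall j, (map_mx (fun a => a%:C%C) A - (mu j)%:M) ^+ m *m w j = 0) /\
     map_mx (fun a => a%:C%C) z = \sum_j w j].

(* Main.v *)
Require Import Defs.
From HB Require Import structures.
From mathcomp Require Import all_boot all_order all_algebra.
From mathcomp Require Import all_classical all_reals all_analysis.
From mathcomp Require Import complex.
From mathcomp Require Import ring lra.
Import Order.TTheory GRing.Theory Num.Theory.
Import numFieldNormedType.Exports.
Local Open Scope ring_scope.

Section S.
Variables (R : realType) (n : nat) (lam : 'I_n -> R) (v : 'I_n -> 'cV[R]_n).
Hypothesis horth : forall i j, (v i)^T *m v j = (i == j)%:R%:M.

Lemma vTH (H : 'M[R]_n) i : H = \sum_j lam j *: (v j *m (v j)^T) ->
  (v i)^T *m H = lam i *: (v i)^T.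
Proof.
move=> ->; rewrite mulmx_sumr (bigD1 i) //= big1 ?addr0.
  by rewrite -scalemxAr mulmxA horth eqxx mul_scalar_mx scale1r.
move=> j /negbTE ji; rewrite -scalemxAr mulmxA horth eq_sym ji mul_scalar_mx.
by rewrite !scale0r scaler0.
Qed.

Lemma root_exists (a b : R) : 1 + b < a -> 0 < b ->
  exists mu : R, 1 < mu /\ mu ^+ 2 - a * mu + b = 0.
Proof.
move=> hab hb.
have hD : 0 <= a ^+ 2 - 4 * b.
  have h1 : 0 < (a - (1 + b)) * (a + (1 + b)) by apply: mulr_gt0; lra.
  have h2 : 0 <= (1 - b) ^+ 2 by apply: sqr_ge0.
  rewrite expr2; rewrite expr2 in h2; nra.
set s := Num.sqrt (a ^+ 2 - 4 * b).
have hs : s ^+ 2 = a ^+ 2 - 4 * b by rewrite sqr_sqrtr.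
have s0 : 0 <= s by rewrite sqrtr_ge0.
exists ((a + s) / 2); split; last first.
  have -> : ((a + s) / 2) ^+ 2 - a * ((a + s) / 2) + b = (s ^+ 2 - a ^+ 2) / 4 + b by field.
  by rewrite hs; field.
rewrite ltr_pdivlMr //. 
case: (lerP 0 (2 - a)) => h; last by nra.
suff : (2 - a) < s by nra.
rewrite -(ltr_pXn2r (n:=2)) //.
  by rewrite hs; nra.
all: by rewrite ?nnegrE ?inE.
Qed.
End S.
Lemma key (R : realType) (n : nat) (H : 'M[R]_n) (u : 'cV[R]_n) (l alpha beta : R)
  (w : 'cV[R]_n) :
  u^T *m H = l *: u^T -> l < 0 -> 0 < alpha -> 0 < beta -> beta < 1 ->
  E_cs (heavy_ball_jacobian H alpha beta) (col_mx w w) -> u^T *m w = 0.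
Proof.
move=> hu hl ha hb0 hb1 [k [mu [ww [hmu [hgen hsum]]]]].
have [m [m1 hm]] := @root_exists R (1 + beta - alpha * l) beta ltac:(nra) hb0.
have m0 : m != 0 by rewrite gt_eqF // (lt_trans ltr01 m1).
pose psi : 'rV[R]_(n + n) := row_mx u^T ((- (beta / m)) *: u^T).
set A := heavy_ball_jacobian H alpha beta.
have hpsi : psi *m A = m *: psi.
  rewrite /psi /A /heavy_ball_jacobian mul_row_block scale_row_mx.
  rewrite !mulmxDr !mulmxN !mul_mx_scalar -scalemxAr hu scale1r mulmx0 addr0.
  rewrite !scalerA.
  congr row_mx; last by rewrite -scaleNr; congr (_ *: _); field.
  rewrite -scalerBl -!scalerDl; congr (_ *: _).
  have hbm : beta / m = (1 + beta - alpha * l) - m.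
    apply: (mulIf m0); rewrite divfK // mulrBl -expr2; lra.
  rewrite hbm; ring.
pose f := real_complex R.
have hsum' : map_mx f (col_mx w w) = \sum_j ww j := hsum.
have hgen' : forall j, (map_mx f A - (mu j)%:M) ^+ (n + n) *m ww j = 0 := hgen.
pose psiC := map_mx f psi.
have hpsiC : psiC *m map_mx f A = (f m) *: psiC by rewrite -map_mxM hpsi map_mxZ.
have hit : forall (nu : R[i]) q, psiC *m (map_mx f A - nu%:M)^+q = (f m - nu)^+q *: psiC.
  move=> nu; elim => [|q IH]; first by rewrite !expr0 scale1r mulmx1.
  rewrite exprSr -mulmxE mulmxA IH -scalemxAl mulmxBr hpsiC mul_mx_scalar.
  by rewrite -scalerBl scalerA -exprSr.
have hw : forall j, psiC *m ww j = 0.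
  move=> j; have := congr1 (mulmx psiC) (hgen' j).
  rewrite mulmx0 mulmxA hit -scalemxAl => /eqP; rewrite scaler_eq0 expf_eq0.
  case/orP => [/andP [_ /eqP c0]|/eqP //].
  have e : mu j = f m by apply/eqP; rewrite eq_sym -subr_eq0 c0.
  have := hmu j; rewrite e /Normc.normc /= expr0n addr0 sqrtr_sqr gtr0_norm.
    by move=> h; exfalso; clear -h m1; lra.
  by clear -m1; lra.
have : psiC *m map_mx f (col_mx w w) = 0.
  by rewrite hsum' mulmx_sumr big1.
rewrite -map_mxM /psi mul_row_col -scalemxAl => /eqP; rewrite map_mx_eq0.
rewrite -{1}[u^T *m w]scale1r -scalerDl scaler_eq0 => /orP [/eqP h|/eqP //].
have : beta / m < 1.
  by rewrite ltr_pdivrMr ?mul1r; lra.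
move=> hh; exfalso; clear -h hh; lra.
Qed.
Lemma expand (R : realType) n (v : 'I_n -> 'cV[R]_n) :
  (forall i j, (v i)^T *m v j = (i == j)%:R%:M) ->
  forall w, w = \sum_k ((v k)^T *m w) 0 0 *: v k.
Proof.
move=> horth w.
pose V : 'M[R]_n := \matrix_(j, k) v k j 0.
have hVV : V^T *m V = 1%:M.
  apply/matrixP => a b; have := congr1 (fun M : 'M[R]_1 => M 0 0) (horth a b).
  rewrite !mxE /= mulr1n => <-; apply: eq_bigr => j _; rewrite !mxE.
  done.
have hV : V *m V^T = 1%:M by apply: mulmx1C.
have e : w = V *m (V^T *m w) by rewrite mulmxA hV mul1mx.
rewrite {1}e.
apply/matrixP => a b; rewrite (ord1 b) summxE !mxE; apply: eq_bigr => k _.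
rewrite !mxE mulrC; congr (_ * _); apply: eq_bigr => j _; by rewrite !mxE.
Qed.

Theorem theorem2p7 (R : realType) (n r p : nat) (f : 'cV[R]_n -> R) (L : R)
  (xstar : 'cV[R]_n) (lam : 'I_n -> R) (v : 'I_n -> 'cV[R]_n) (lam1 alpha beta : R) :
  (1 <= r)%N ->
  Ck r.+1 f ->
  lipschitz_with (gradient f) L ->
  gradient f xstar = 0 ->
  (forall i j, (v i)^T *m v j = (i == j)%:R%:M) ->
  hessian f xstar = \sum_i lam i *: (v i *m (v i)^T) ->
  (1 <= p)%N -> (p < n)%N ->
  (forall i j : 'I_n, (i <= j)%N -> lam j <= lam i) ->
  (forall i : 'I_n, (i < n - p)%N -> 0 <= lam i) ->
  (forall i : 'I_n, (n - p <= i)%N -> lam i < 0) ->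
  (forall i : 'I_n, val i = 0%N -> lam i = lam1) ->
  0 < lam1 ->
  0 < alpha -> alpha < 4 / lam1 ->
  0 < beta -> -1 + alpha * lam1 / 2 < beta -> beta < 1 ->
  forall w : 'cV[R]_n,
    E_cs (heavy_ball_jacobian (hessian f xstar) alpha beta) (col_mx w w) ->
    exists c : 'I_n -> R, w = \sum_(i : 'I_n | (i < n - p)%N) c i *: v i.
Proof.
move=> _ _ _ _ horth hH _ _ _ _ hneg _ _ ha _ hb0 _ hb1 w hE.
have hv : forall i : 'I_n, lam i < 0 -> (v i)^T *m w = 0.
  move=> i hl; exact: (@key _ _ _ _ _ alpha beta w (@vTH _ _ lam v horth _ i hH) hl ha hb0 hb1 hE).
exists (fun k => ((v k)^T *m w) 0 0).
rewrite {1}(@expand _ _ v horth w) (bigID (fun i : 'I_n => (i < n - p)%N)) /=.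
rewrite [X in _ + X]big1 ?addr0 // => i hi.
by rewrite hv ?mxE ?scale0r // hneg // leqNgt.
Qed.
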